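(* Let $X$ be a Banach space, $C\subset X$ a nonempty generalized polyhedral convex set, and $f:X\to\mathbb R$ continuously Fréchet differentiable on $X$. Let $\bar x$ be a local minimum of $\min\{f(x)\mid x\in C\}$, and suppose there exist $\ell>0$ and a neighborhood $U$ of $\bar x$ such that $\|\nabla f(x)-\nabla f(\bar x)\|\le\ell\|x-\bar x\|$ for all $x\in U$. Then $\langle\nabla f(\bar x),v\rangle\ge0$ for all $v\in T_C(\bar x)$, and for each $v\in X$ such that $v\in T_C(\bar x)$, $-v\in T_C(\bar x)$ and $\langle\nabla f(\bar x),v\rangle=0$, one has $$\langle\nabla f(\bar x),w\rangle\ge0\ \text{ for all } w\in T^2_C(\bar x,v)\quad\text{and}\quad \langle z,v\rangle\ge 0\ \text{ for all } z\in\widehat\partial^2 f(\bar x)(v),$$ where $v$ is regarded as an element of $X^{**}$ via the canonical embedding.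
   Context: Contingent cone: for $C\subset X$ and $\bar x\in C$, $T_C(\bar x)$ is the set of $v\in X$ for which there exist $\tau_k>0$, $\tau_k\to0$, and $x_k\in C$ with $v=\lim_k \tau_k^{-1}(x_k-\bar x)$. Second-order tangent set: for $v\in T_C(\bar x)$, $T^2_C(\bar x,v)$ is the set of $w\in X$ for which there exist $\tau_k>0$, $\tau_k\to 0$, and $x^k\in C$ with $w=\lim_k \frac{x^k-\bar x-\tau_k v}{\tau_k^2/2}$. A set $D\subset X$ is generalized polyhedral convex if $D=\{x\in L\mid \langle x_i^*,x\rangle\le\alpha_i,\ i=1,\dots,p\}$ for some $x_i^*\in X^*$, $\alpha_i\in\mathbb R$ and a closed affine subspace $L\subset X$. Fréchet normal cone: for $\Omega\subset Z$ (Banach space) and $z\in\Omega$, $\widehat N_\Omega(z)=\{z^*\in Z^*\mid \limsup_{u\to z,\,u\in\Omega}\frac{\langle z^*,u-z\rangle}{\|u-z\|}\le0\}$. For $f$ Fréchet differentiable, the Fréchet second-order subdifferential at $\bar x$ is the map $\widehat\partial^2 f(\bar x):X^{**}\rightrightarrows X^*$, $\widehat\partial^2 f(\bar x)(u)=\{z\in X^*\mid (z,-u)\in\widehat N_{\mathrm{gph}\,\nabla f}((\bar x,\nabla f(\bar x)))\}$, where $\mathrm{gph}\,\nabla f=\{(x,\nabla f(x))\mid x\in X\}\subset X\times X^*$ with norm $\|(x,x^* )\|=\|x\|+\|x^*\|$ and dual $X^*\times X^{**}$; in the claim it is restricted to $u\in X\subset X^{**}$, where $\langle u,x^*\rangle:=\langle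 x^*,u\rangle$. *)

(* Defs.v *)
From HB Require Import structures.
From mathcomp Require Import all_boot all_order all_algebra.
From mathcomp Require Import all_classical all_reals all_analysis.
Set Implicit Arguments. Unset Strict Implicit. Unset Printing Implicit Defensive.
Import Order.TTheory GRing.Theory Num.Theory.
Import numFieldNormedType.Exports.
Local Open Scope classical_set_scope.
Local Open Scope ring_scope.

Section Defs.
Variables (R : realType) (X : normedModType R).

Definition is_dual (g : X -> R) : Prop :=
  (forall (a : R) (x y : X), g (a *: x + y) = a * g x + g y) /\ continuous g.

Definition dnorm (g : X -> R) : R :=
  sup [set `|g x| | x in [set x : X | `|x| <= 1]].

Definition C1 (f : X -> R) : Prop :=
  (forall x, differentiable f x) /\
  (forall x (e : R), 0 < e -> exists2 d : R, 0 < d &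
     forall y, `|y - x| < d -> dnorm (fun h => 'd f y h - 'd f x h) < e).

Definition closed_affine (L : set X) : Prop :=
  exists (a : X) (M : set X),
    [/\ M 0, (forall (r : R) x y, M x -> M y -> M (r *: x + y)), closed M &
        L = [set a + m | m in M]].

Definition gen_polyhedral (C : set X) : Prop :=
  exists (p : nat) (xs : nat -> X -> R) (alpha : nat -> R) (L : set X),
    [/\ closed_affine L, (forall i, (i < p)%N -> is_dual (xs i)) &
        C = [set x | L x /\ forall i, (i < p)%N -> xs i x <= alpha i]].

Definition tangent_cone (C : set X) (xbar : X) : set X :=
  [set v | exists (tau : nat -> R) (xk : nat -> X),
     [/\ forall k, 0 < tau k, tau @ \oo --> (0 : R), forall k, C (xk k) &
         (fun k => (tau k)^-1 *: (xk k - xbar)) @ \oo --> v]].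

Definition tangent_set2 (C : set X) (xbar v : X) : set X :=
  [set w | exists (tau : nat -> R) (xk : nat -> X),
     [/\ forall k, 0 < tau k, tau @ \oo --> (0 : R), forall k, C (xk k) &
         (fun k => ((tau k ^+ 2) / 2)^-1 *: (xk k - xbar - tau k *: v))
           @ \oo --> w]].

(** Frechet second-order subdifferential restricted to u in X (embedded in
    X^{**}): z in hat-d^2 f(xbar)(u) iff z in X^{*} and (z,-u) is a Frechet normal
    to gph (grad f) at (xbar, grad f xbar), where X x X^{*} carries the norm
    ||(x,x_) || = ||x|| + ||x_||_{dual} and the pairing of (z,-u) with (x,x_) is
    z x - x_(u).  The limsup over points of the graph (x, grad f x) distinct
    from (xbar, grad f xbar) (i.e. x <> xbar) is unfolded. *)
Definition frechet_sod (f : X -> R) (xbar u : X) : set (X -> R) :=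
  [set z | is_dual z /\
     forall e : R, 0 < e -> exists2 d : R, 0 < d &
       forall x : X,
         let nd := `|x - xbar| + dnorm (fun h => 'd f x h - 'd f xbar h) in
         0 < nd -> nd < d ->
         (z (x - xbar) - ('d f x u - 'd f xbar u)) / nd <= e].

End Defs.

(* Main.v *)
Require Import Defs.
From HB Require Import structures.
From mathcomp Require Import all_boot all_order all_algebra.
From mathcomp Require Import all_classical all_reals all_analysis.
From mathcomp Require Import lra.
Import Order.TTheory GRing.Theory Num.Theory.
Import numFieldNormedType.Exports.
Local Open Scope classical_set_scope.
Local Open Scope ring_scope.
Set Implicit Arguments. Unset Strict Implicit.


Section H.
Variables (R : realType) (X : normedModType R).

Lemma dual0 (g : X -> R) : is_dual g -> g 0 = 0.
Proof. move=> [H _]; have := H 1 0 0; rewrite scale1r addr0 mul1r => e; lra. Qed.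

Lemma dualZ (g : X -> R) r x : is_dual g -> g (r *: x) = r * g x.
Proof. move=> gd; have := gd.1 r x 0; by rewrite addr0 dual0 // addr0. Qed.

Lemma dualD (g : X -> R) x y : is_dual g -> g (x + y) = g x + g y.
Proof. move=> gd; have := gd.1 1 x y; by rewrite scale1r mul1r. Qed.

Lemma dualN (g : X -> R) x : is_dual g -> g (- x) = - g x.
Proof. by move=> gd; rewrite -scaleN1r dualZ // mulN1r. Qed.

Lemma dualB (g : X -> R) x y : is_dual g -> g (x - y) = g x - g y.
Proof. by move=> gd; rewrite dualD // dualN. Qed.

Lemma pl_dnorm_ge0 (g : X -> R) : is_dual g -> 0 <= dnorm g.
Proof.
move=> gd; rewrite /dnorm.
case: (pselect (has_sup [set `|g x| | x in [set x : X | `|x| <= 1]])) => hs.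
  apply: le_trans (sup_upper_bound hs _); last by exists 0 => //=; rewrite normr0.
  by rewrite dual0 // normr0.
by rewrite sup_out.
Qed.

Lemma fin_delta (P : nat -> R -> Prop) n :
  (forall i, (i < n)%N -> exists2 d : R, 0 < d & forall t, 0 < t -> t < d -> P i t) ->
  exists2 d : R, 0 < d & forall t, 0 < t -> t < d -> forall i, (i < n)%N -> P i t.
Proof.
elim: n => [|n IH] H; first by exists 1 => // t _ _ i.
have [d1 d10 H1] := IH (fun i hi => H i (ltnW hi)).
have [d2 d20 H2] := H n (ltnSn n).
exists (Num.min d1 d2); first by rewrite lt_min d10 d20.
move=> t t0; rewrite lt_min => /andP[td1 td2] i; rewrite ltnS leq_eqVlt => /orP[/eqP->|hi].
  exact: H2.
exact: H1.
Qed.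

Lemma dnbhs_right : (0:R)^'+ `=>` (0:R)^'.
Proof.
move=> P [e e0 He]; exists e => // y hy y0; apply: He => //.
by rewrite gt_eqF.
Qed.

End H.


Section G.
Variables (R : realType) (X : normedModType R).

Lemma poly_setup (C : set X) xbar : gen_polyhedral C -> C xbar ->
  exists p (xs : nat -> X -> R) (alpha : nat -> R) (M : set X),
  [/\ M 0, (forall (r : R) x y, M x -> M y -> M (r *: x + y)), closed M,
      (forall i, (i < p)%N -> is_dual (xs i)) &
      forall x, C x <-> (M (x - xbar) /\ forall i, (i < p)%N -> xs i x <= alpha i)].
Proof.
move=> [p [xs [alpha [L [[a [M [M0 Ml cM ->]]] dual ->]]]]] [[m0 Mm0 <-] _].
exists p, xs, alpha, M; split => // x; split.
- move=> [[m Mm <-] H]; split => //.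
  have -> : a + m - (a + m0) = (-1) *: m0 + m.
    by rewrite scaleN1r opprD addrACA subrr add0r addrC.
  exact: Ml.
- move=> [Mx H]; split => //; exists (1 *: m0 + (x - (a + m0))); first exact: Ml.
  by rewrite scale1r addrA addrC addrNK.
Qed.

Variables (C : set X) (xbar : X) (p : nat) (xs : nat -> X -> R) (alpha : nat -> R)
  (M : set X).
Hypotheses (M0 : M 0) (Ml : forall (r : R) x y, M x -> M y -> M (r *: x + y))
  (cM : closed M) (dual : forall i, (i < p)%N -> is_dual (xs i))
  (Cchar : forall x, C x <-> (M (x - xbar) /\ forall i, (i < p)%N -> xs i x <= alpha i))
  (Cx : C xbar).

Lemma MZ r x : M x -> M (r *: x).
Proof. by move=> Mx; have := @Ml r x 0 Mx M0; rewrite addr0. Qed.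

Lemma cone_char v : tangent_cone C xbar v ->
  M v /\ forall i, (i < p)%N -> xs i xbar = alpha i -> xs i v <= 0.
Proof.
move=> [tau [xk [tau0 tauc Cxk yv]]]; split.
  apply: (closed_cvg _ cM _ _ yv); apply: nearW => k /=.
  by apply: MZ; have [] := (Cchar _).1 (Cxk k).
move=> i ip act.
have xcont : continuous (xs i) by have [] := dual ip.
have := cvg_comp _ _ yv (xcont v).
move=> H; apply: (closed_cvg _ (@closed_le _ 0) _ _ H); apply: nearW => k /=.
rewrite (dualZ _ _ (dual ip)) (dualB _ _ (dual ip)); apply: mulr_ge0_le0; first by rewrite invr_ge0 ltW.
have [_ H2] := (Cchar _).1 (Cxk k); have := H2 i ip; rewrite act subr_le0 //.
Qed.

Lemma line_in u : M u -> (forall i, (i < p)%N -> xs i xbar = alpha i -> xs i u <= 0) ->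
  exists2 d : R, 0 < d & forall t, 0 < t -> t < d -> C (xbar + t *: u).
Proof.
move=> Mu hu.
suff [d d0 Hd] : exists2 d : R, 0 < d & forall t, 0 < t -> t < d ->
    forall i, (i < p)%N -> (i < p)%N -> xs i (xbar + t *: u) <= alpha i.
  exists d => // t t0 td; apply/Cchar; split.
    by rewrite addrAC subrr add0r; apply: MZ.
  by move=> i ip; apply: (Hd t t0 td i ip ip).
apply: fin_delta => i ip.
have [act|nact] := eqVneq (xs i xbar) (alpha i).
  exists 1 => // t t0 _ _; rewrite (dualD _ _ (dual ip)) (dualZ _ _ (dual ip)); have := hu i ip act; nra.
have lt : xs i xbar < alpha i.
  by rewrite lt_neqAle nact; have [_ H] := (Cchar _).1 Cx; exact: H.
set a := `|xs i u|.
have a0 : 0 <= a by exact: normr_ge0.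
have au : xs i u <= a by exact: ler_norm.
have a1 : 0 < a + 1 by lra.
exists ((alpha i - xs i xbar) / (a + 1)); first by rewrite divr_gt0 // subr_gt0.
move=> t t0; rewrite ltr_pdivlMr // => td _.
rewrite (dualD _ _ (dual ip)) (dualZ _ _ (dual ip)); nra.
Qed.

End G.


Section A.
Variables (R : realType) (X : normedModType R).

Lemma first_order (f : X -> R) (C : set X) xbar u : differentiable f xbar ->
  (\forall x \near xbar, C x -> f xbar <= f x) ->
  (exists2 d : R, 0 < d & forall t, 0 < t -> t < d -> C (xbar + t *: u)) ->
  0 <= 'd f xbar u.
Proof.
move=> dfx hmin [d d0 Hd].
have der : derivable f xbar u := diff_derivable dfx.
rewrite -deriveE //.
have Hc := der.
have Hr := cvg_trans (cvg_app _ (@dnbhs_right R)) Hc.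
rewrite /derive -(cvg_lim _ Hr) //.
apply: limr_ge; first by apply/cvg_ex; eexists; exact: Hr.
move/nbhs_ballP: hmin => [e e0 He].
have ue : 0 < e / (`|u| + 1) by rewrite divr_gt0 // ltr_wpDl.
near=> h.
have h0 : 0 < h by near: h; exact: nbhs_right_gt.
have hd : h < d by near: h; exact: nbhs_right_lt.
have he : h < e / (`|u| + 1) by near: h; exact: nbhs_right_lt.
have Cx := Hd h h0 hd.
have : f xbar <= f (xbar + h *: u).
  apply: He Cx; rewrite -ball_normE /= opprD addrA subrr add0r normrN normrZ gtr0_norm //.
  move: he; rewrite ltr_pdivlMr ?ltr_wpDl //; nra.
rewrite /= addrC => hf.
apply: mulr_ge0; first by rewrite invr_ge0 ltW.
by rewrite subr_ge0.
Unshelve. all: by end_near.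
Qed.

Lemma small_pos (b c : R) : 0 < b -> 0 < c -> \forall s \near (0:R)^'+, s * c < b.
Proof.
move=> b0 c0; near=> s.
have s0 : 0 < s by near: s; exact: nbhs_right_gt.
have : s < b / c by near: s; apply: nbhs_right_lt; rewrite divr_gt0.
by rewrite ltr_pdivlMr.
Unshelve. all: by end_near.
Qed.

Lemma dual_diff (f : X -> R) x y : differentiable f x -> differentiable f y ->
  is_dual (fun h => 'd f x h - 'd f y h).
Proof.
move=> dx dy; split.
  have sc (r b : R) : r *: b = r * b by [].
  move=> a u w; rewrite !linearD !linearZ /= !sc; lra.
move=> u; apply: continuousB; exact: diff_continuous.
Qed.

Lemma sod_lemma (f : X -> R) (C : set X) xbar v (l : R) (U : set X) z :
 (forall x, differentiable f x) -> (\forall x \near xbar, C x -> f xbar <= f x) ->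
 0 < l -> nbhs xbar U ->
 (forall x, U x -> dnorm (fun h => 'd f x h - 'd f xbar h) <= l * `|x - xbar|) ->
 (exists2 d : R, 0 < d & forall t, 0 < t -> t < d -> C (xbar + t *: (- v))) ->
 'd f xbar v = 0 -> frechet_sod f xbar v z -> 0 <= z v.
Proof.
move=> df hmin l0 hU hL [d1 d10 Hd1] dv0 [zd Hz].
have [->|vn0] := eqVneq v 0; first by rewrite dual0.
have nv : 0 < `|v| by rewrite normr_gt0.
rewrite leNgt; apply/negP => zneg.
set K := `|v| * (1 + l).
have K0 : 0 < K by rewrite mulr_gt0 // ltr_wpDr // ltW.
set e := - z v / (2 * K).
have e0 : 0 < e by rewrite divr_gt0 ?oppr_gt0 // mulr_gt0.
have eK : e * (2 * K) = - z v by rewrite /e divfK // gt_eqF // mulr_gt0.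
have [d d0 Hd] := Hz e e0.
move/nbhs_ballP: hmin => [eL eL0 HL].
move/nbhs_ballP: hU => [eU eU0 HU].
have [s [s0 sd1 sL sU sK]] : exists s, [/\ 0 < s, s < d1, s * `|v| < eL, s * `|v| < eU & s * K < d].
  apply: (@filter_ex _ (0:R)^'+); near=> s; split.
  - by near: s; exact: nbhs_right_gt.
  - by near: s; exact: nbhs_right_lt.
  - by near: s; exact: small_pos.
  - by near: s; exact: small_pos.
  - by near: s; exact: small_pos.
set phi := fun t : R => f (t *: (- v) + xbar).
have Eq x : (fun h : R => h^-1 *: ((phi \o shift x) (h *: 1) - phi x)) =
   (fun h => h^-1 *: ((f \o shift (x *: - v + xbar)) (h *: - v) - f (x *: - v + xbar))).
  have sc (r b : R) : r *: b = r * b by [].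
  by apply/funext => h /=; rewrite /phi /= [_%:A]sc mulr1 scalerDl -addrA.
have dphi (x : R) : is_derive x (1:R) phi ('d f (x *: - v + xbar) (- v)).
  split; first by rewrite /derivable Eq; exact: diff_derivable.
  rewrite /derive Eq -[lim _]/(derive f (x *: - v + xbar) (- v)).
  exact: deriveE.
have dvphi (x : R) : derivable phi x 1 by case: (dphi x).
have [c cI hc] := MVT s0 (fun x _ => dphi x)
  (derivable_within_continuous (fun x _ => dvphi x)).
move: cI; rewrite in_itv /= => /andP[c0 cs].
set y := c *: - v + xbar.
have phi0 : phi 0 = f xbar by rewrite /phi scale0r add0r.
have phis : f xbar <= phi s.
  apply: HL; last by rewrite addrC; apply: Hd1.
  by rewrite -ball_normE /= distrC addrK normrZ normrN gtr0_norm.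
have dfy : 'd f y v <= 0.
  move: hc; rewrite phi0 linearN /= subr0 => hc.
  have : 0 <= - 'd f y v * s by rewrite -hc subr_ge0.
  nra.
have ny : `|y - xbar| = c * `|v| by rewrite /y addrK normrZ normrN gtr0_norm.
have Uy : U y.
  apply: HU; rewrite -ball_normE /= distrC ny.
  apply: le_lt_trans sU; rewrite ler_pM2r //; exact: ltW.
have Dn := hL y Uy; rewrite ny in Dn.
have Dn0 := pl_dnorm_ge0 (dual_diff (df y) (df xbar)).
have Hz' := Hd y; rewrite /= ny in Hz'.
set D := dnorm _ in Dn Dn0 Hz'.
have nd0 : 0 < c * `|v| + D by rewrite ltr_wpDr // mulr_gt0.
have ndK : c * `|v| + D <= c * K by rewrite /K; nra.
have ndd : c * `|v| + D < d by apply: le_lt_trans ndK _; apply: le_lt_trans sK; rewrite ler_pM2r // ltW.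
have := Hz' nd0 ndd.
rewrite ler_pdivrMr // dv0 subr0 /y addrK (dualZ _ _ zd) (dualN _ zd) => H.
have : e * (c * `|v| + D) <= e * (c * K) by rewrite ler_pM2l.
nra.
Unshelve. all: by end_near.
Qed.
End A.

Unset Implicit Arguments. Set Strict Implicit.


Theorem theorem4p1 (R : realType) (X : completeNormedModType R)
  (C : set X) (f : X -> R) (xbar : X) (l : R) (U : set X) :
  C !=set0 -> gen_polyhedral C -> C1 f ->
  C xbar -> (\forall x \near xbar, C x -> f xbar <= f x) ->
  0 < l -> nbhs xbar U ->
  (forall x, U x -> dnorm (fun h => 'd f x h - 'd f xbar h) <= l * `|x - xbar|) ->
  (forall v, tangent_cone C xbar v -> 0 <= 'd f xbar v) /\
  (forall v : X, tangent_cone C xbar v -> tangent_cone C xbar (- v) ->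
     'd f xbar v = 0 ->
     (forall w, tangent_set2 C xbar v w -> 0 <= 'd f xbar w) /\
     (forall z, frechet_sod f xbar v z -> 0 <= z v)).
Proof.
move=> _ gp fC Cx hmin l0 hU hL.
have [p [xs [alpha [M [M0 Ml cM dual Cchar]]]]] := poly_setup gp Cx.
have df := fC.1.
have LI := line_in M0 Ml dual Cchar Cx.
have CC := cone_char M0 Ml cM dual Cchar.
have fo u : M u -> (forall i, (i < p)%N -> xs i xbar = alpha i -> xs i u <= 0) ->
    0 <= 'd f xbar u.
  by move=> Mu hu; apply: (first_order (df xbar) hmin); exact: LI.
split; first by move=> v /CC [Mv hv]; exact: fo.
move=> v /CC [Mv hv] /CC [_ hnv] dv0.
have hv0 i : (i < p)%N -> xs i xbar = alpha i -> xs i v = 0.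
  move=> ip act; have := hv i ip act; have := hnv i ip act.
  rewrite (dualN _ (dual _ ip)); lra.
split.
- move=> w [tau [xk [tau0 _ Cxk wc]]]; apply: fo.
  + apply: (closed_cvg _ cM _ _ wc); apply: nearW => k /=.
    have [Mk _] := (Cchar _).1 (Cxk k).
    have := Ml (- tau k) _ _ Mv Mk.
    rewrite scaleNr addrC => H; have := Ml (((tau k ^+ 2) / 2)^-1) _ 0 H M0.
    by rewrite addr0.
  + move=> i ip act; have xcont : continuous (xs i) by have [] := dual _ ip.
    have H := cvg_comp _ _ wc (xcont w).
    apply: (closed_cvg _ (@closed_le _ 0) _ _ H); apply: nearW => k /=.
    rewrite (dualZ _ _ (dual _ ip)) (dualB _ _ (dual _ ip)) (dualB _ _ (dual _ ip)).
    rewrite (dualZ _ _ (dual _ ip)) (hv0 i ip act) mulr0 subr0.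
    apply: mulr_ge0_le0; first by rewrite invr_ge0 divr_ge0 // sqr_ge0.
    by have [_ H2] := (Cchar _).1 (Cxk k); have := H2 i ip; rewrite act subr_le0.
- move=> z hz; apply: (sod_lemma df hmin l0 hU hL _ dv0 hz).
  apply: LI.
    by have := Ml (-1) _ 0 Mv M0; rewrite addr0 scaleN1r.
  by move=> i ip act; rewrite (dualN _ (dual _ ip)) (hv0 i ip act) oppr0.
Qed.
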